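(* Let $F$ be a finite-dimensional subspace of $c_0$ which is an ideal in $c_0$. Then $F^*$ is (isometrically) a subspace of $\ell_1$ which is $k$-strictly convex for some $k\in\mathbb N$.
   Context: $c_0$ carries the sup norm and $c_0^*=\ell_1$. A closed subspace $Y$ of $X$ is an ideal in $X$ if there is a linear projection $P$ on $X^*$ with $\|P\|=1$ and $\ker P=Y^\perp=\{x^*\in X^*:x^*|_Y=0\}$; then $Y^*$ is isometric to the range of $P$. A normed space $E$ is $k$-strictly convex if for any $k+1$ linearly independent $x_1,\dots,x_{k+1}\in S_E$ one has $\|\sum_{i=1}^{k+1}x_i\|<k+1$. *)

(* Defs.v *)
From HB Require Import structures.
From mathcomp Require Import all_boot all_order all_algebra.
From mathcomp Require Import all_classical all_reals all_analysis.
Set Implicit Arguments. Unset Strict Implicit. Unset Printing Implicit Defensive.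
Import Order.TTheory GRing.Theory Num.Theory.
Import numFieldNormedType.Exports.
Local Open Scope classical_set_scope.
Local Open Scope ring_scope.

Section Defs.
Variable R : realType.

Definition c0 : set (nat -> R) := [set x : nat -> R | x @ \oo --> 0].
Definition supnorm (x : nat -> R) : R := sup (range (fun n => `|x n|)).

Definition l1 : set (nat -> R) := [set a : nat -> R | cvgn (series (fun n => `|a n|))].
Definition l1norm (a : nat -> R) : R := limn (series (fun n => `|a n|)).

(* the duality pairing c_0^* = l_1 *)
Definition pairing (a x : nat -> R) : R := limn (series (fun n => a n * x n)).

Definition fspan (n : nat) (v : 'I_n -> nat -> R) : set (nat -> R) :=
  [set x | exists c : 'I_n -> R, x = (fun m => \sum_(i < n) c i * v i m)].

Definition annihilator (Y : set (nat -> R)) : set (nat -> R) :=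
  [set a | l1 a /\ forall x, Y x -> pairing a x = 0].

(* Y is an ideal in c_0: there is a linear projection P on c_0^* = l_1 with
   ||P|| = 1 and ker P = Y^perp *)
Definition is_ideal_in_c0 (Y : set (nat -> R)) : Prop :=
  exists P : (nat -> R) -> (nat -> R),
    [/\ (forall a, l1 a -> l1 (P a)),
        (forall (s t : R) a b, l1 a -> l1 b ->
            P (fun n => s * a n + t * b n) = (fun n => s * P a n + t * P b n)),
        (forall a, l1 a -> P (P a) = P a) &
        sup [set l1norm (P a) | a in [set a | l1 a /\ l1norm a <= 1]] = 1] /\
    (forall a, l1 a -> (P a = (fun _ => 0) <-> annihilator Y a)).

(* F^*: linear functionals on F (all bounded, F finite-dimensional),
   identified when they agree on F; dual norm *)
Definition dual_elt (F : set (nat -> R)) (g : (nat -> R) -> R) : Prop :=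
  forall (s t : R) x y, F x -> F y ->
    g (fun n => s * x n + t * y n) = s * g x + t * g y.
Definition dualnorm (F : set (nat -> R)) (g : (nat -> R) -> R) : R :=
  sup [set `|g x| | x in [set x | F x /\ supnorm x <= 1]].

Definition k_strictly_convex (k : nat) (V : set (nat -> R)) : Prop :=
  forall x : 'I_k.+1 -> nat -> R,
    (forall i, V (x i) /\ l1norm (x i) = 1) ->
    (forall c : 'I_k.+1 -> R,
        (fun m => \sum_(i < k.+1) c i * x i m) = (fun _ => 0) ->
        forall i, c i = 0) ->
    l1norm (fun m => \sum_(i < k.+1) x i m) < k.+1%:R.
End Defs.

(* Main.v *)
Require Import Defs.
From HB Require Import structures.
From mathcomp Require Import all_boot all_order all_algebra.
From mathcomp Require Import all_classical all_reals all_analysis.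
From mathcomp Require Import zify ring lra.
Import Order.TTheory GRing.Theory Num.Theory.
Import numFieldNormedType.Exports.
Local Open Scope classical_set_scope.
Local Open Scope ring_scope.
Set Implicit Arguments. Unset Strict Implicit. Unset Printing Implicit Defensive.
Section A.
Variable R : realType.
Implicit Types a x : nat -> R.

Lemma fin_series_cvg a K : (forall m, (K <= m)%N -> a m = 0) ->
  series a @ \oo --> \sum_(m < K) a m.
Proof.
move=> H; apply: cvg_near_cst; exists K => // k /= hk.
rewrite /series /= (@big_cat_nat _ _ _ K 0 k _ _ (leq0n K) hk) /= big_mkord.
have -> : \sum_(K <= i < k) a i = 0.
  by rewrite big_nat_cond big1 // => i /andP[/andP[Ki _] _]; exact: H.
by rewrite addr0.
Qed.

Lemma fin_series_lim a K : (forall m, (K <= m)%N -> a m = 0) ->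
  cvgn (series a) /\ limn (series a) = \sum_(m < K) a m.
Proof.
move=> H; have h := fin_series_cvg H; split; first by apply/cvg_ex; eexists; exact: h.
exact: cvg_lim h.
Qed.
Lemma psum_le_l1 a M : l1 a -> \sum_(m < M) `|a m| <= l1norm a.
Proof.
move=> ha; rewrite /l1norm.
have := @nondecreasing_cvgn_le _ (series (fun n => `|a n|)).
move=> /(_ _ ha M); rewrite /series /= big_mkord; apply.
by apply: nondecreasing_series => n _ _.
Qed.

Lemma l1norm_le a c : l1 a -> (forall M, \sum_(m < M) `|a m| <= c) -> l1norm a <= c.
Proof.
move=> ha H; rewrite /l1norm; apply: limr_le => //.
by near=> M; rewrite /series /= big_mkord.
Unshelve. all: by end_near. Qed.

Lemma l1norm_ge0 a : l1 a -> 0 <= l1norm a.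
Proof. by move=> ha; apply: le_trans (psum_le_l1 0 ha); rewrite big_ord0. Qed.

Lemma pairing_bound a x : l1 a -> (forall m, `|x m| <= 1) ->
  cvgn (series (fun m => a m * x m)) /\ `|pairing a x| <= l1norm a.
Proof.
move=> ha hx.
have hxa : forall n, `|a n * x n| <= `|a n|.
  by move=> n; rewrite normrM -[leRHS]mulr1 ler_wpM2l.
have hn : cvgn [normed series (fun m => a m * x m)].
  by apply: (series_le_cvg _ _ _ ha) => n //=.
split; first exact: normed_cvg.
apply: le_trans (lim_series_norm hn) _.
by apply: lim_series_le.
Qed.

Lemma l1_lin (s t : R) a b : l1 a -> l1 b -> l1 (fun k => s * a k + t * b k).
Proof.
move=> ha hb.
have hc : cvgn (series (fun k => `|s| * `|a k| + `|t| * `|b k|)).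
  have -> : (fun k => `|s| * `|a k| + `|t| * `|b k|) =
     (`|s| *: (fun k => `|a k|)) + (`|t| *: (fun k => `|b k|)).
    by apply/funext => k /=.
  by apply: is_cvg_seriesD; apply: is_cvg_seriesZ.
by apply: (series_le_cvg _ _ _ hc) => k //=; apply: le_trans (ler_normD _ _) _; rewrite !normrM.
Qed.

Lemma sum_supp a K M : (forall m, (K <= m)%N -> a m = 0) -> (K <= M)%N ->
  \sum_(k < M) a k = \sum_(k < K) a k.
Proof.
move=> H hKM.
have [_ <-] := fin_series_lim H.
have H' : forall m, (M <= m)%N -> a m = 0 by move=> m hm; apply: H; apply: leq_trans hm.
by have [_ <-] := fin_series_lim H'.
Qed.

Definition ev (j : nat) : nat -> R := fun m => (m == j)%:R.

Lemma c0_sum K (f : 'I_K -> nat -> R) (c : 'I_K -> R) :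
  (forall j, c0 (f j)) -> c0 (fun m => \sum_(j < K) c j * f j m).
Proof.
elim: K f c => [|K IH] f c hf.
  rewrite /c0 /=; have -> : (fun m : nat => \sum_(j < 0) c j * f j m) = fun _ => 0.
    by apply/funext => m; rewrite big_ord0.
  exact: cvg_cst.
have -> : (fun m => \sum_(j < K.+1) c j * f j m) =
   (fun m => \sum_(j < K) c (widen_ord (leqnSn K) j) * f (widen_ord (leqnSn K) j) m)
   + (c ord_max) *: f ord_max.
  by apply/funext => m; rewrite big_ord_recr.
have h1 := IH (fun j => f (widen_ord (leqnSn K) j)) (fun j => c (widen_ord (leqnSn K) j)) (fun j => hf _).
have h2 : (c ord_max *: f ord_max) @ \oo --> c ord_max *: (0 : R).
  by apply: cvgZr; exact: hf.
by have := cvgD h1 h2; rewrite scaler0 addr0 => H; exact: H.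
Qed.
End A.

Section B.
Variable R : realType.
Variable n : nat.
Variable v : 'I_n -> nat -> R.

Definition wv (m : nat) : 'rV[R]_n := \row_i v i m.
Definition Amx (K : nat) : 'M[R]_(K, n) := \matrix_(j < K, i < n) v i j.

Lemma row_Amx K (j : 'I_K) : row j (Amx K) = wv j.
Proof. by apply/rowP => i; rewrite !mxE. Qed.

Lemma Amx_mono K K' : (K <= K')%N -> (Amx K <= Amx K')%MS.
Proof.
move=> hK; apply/row_subP => j; rewrite row_Amx.
have hj : (j < K')%N by apply: leq_trans (ltn_ord j) hK.
by rewrite -(row_Amx (Ordinal hj)) row_sub.
Qed.

Lemma wv_sub K m : (m < K)%N -> (wv m <= Amx K)%MS.
Proof. by move=> hm; rewrite -(row_Amx (Ordinal hm)) row_sub. Qed.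

Lemma stab_aux d : forall K, (n - \rank (Amx K) <= d)%N ->
  exists N, forall m, (wv m <= Amx N)%MS.
Proof.
elim: d => [|d IH] K hK.
  exists K => m.
  have sub := Amx_mono (leq_addr m.+1 K).
  suff : (Amx (K + m.+1) <= Amx K)%MS.
    by apply: submx_trans; apply: wv_sub; rewrite ltn_addl.
  rewrite -(geq_leqif (mxrank_leqif_sup sub)).
  have := rank_leq_col (Amx (K + m.+1)); lia.
case: (pselect (forall m, (wv m <= Amx K)%MS)) => [h|/existsNP[m hm]]; first by exists K.
apply: (IH (K + m.+1)%N).
have sub := Amx_mono (leq_addr m.+1 K).
have hlt : (\rank (Amx K) < \rank (Amx (K + m.+1)))%N.
  rewrite (ltn_leqif (mxrank_leqif_sup sub)); apply/negP => hs; apply: hm.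
  by apply: submx_trans hs; apply: wv_sub; rewrite ltn_addl.
have := rank_leq_col (Amx (K + m.+1)); lia.
Qed.

Lemma stab : exists N, forall m, (wv m <= Amx N)%MS.
Proof. apply: (@stab_aux n 0%N); lia. Qed.
End B.
Section C.
Variable R : realType.
Variable n : nat.
Variable v : 'I_n -> nat -> R.
Hypothesis hv : forall i, c0 (v i).
Local Notation F := (fspan v).
Implicit Types a x : nat -> R.

Lemma F_lin (s t : R) x y : F x -> F y -> F (fun k => s * x k + t * y k).
Proof.
move=> [c ->] [d ->]; exists (fun i => s * c i + t * d i); apply/funext => m.
rewrite !mulr_sumr -big_split /=; apply: eq_bigr => i _; rewrite mulrDl !mulrA //.
Qed.

Lemma F_v i : F (v i).
Proof.
exists (fun j => (j == i)%:R); apply/funext => m.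
rewrite (bigD1 i) //= eqxx mul1r big1 ?addr0 // => j /negPf ->; by rewrite mul0r.
Qed.

Lemma F0 : F (fun _ => 0).
Proof. by exists (fun _ => 0); apply/funext => m; rewrite big1 // => i _; rewrite mul0r. Qed.

Lemma F_sum K (f : 'I_K -> nat -> R) (c : 'I_K -> R) :
  (forall j, F (f j)) -> F (fun m => \sum_(j < K) c j * f j m).
Proof.
elim: K f c => [|K IH] f c hf.
  have -> : (fun m => \sum_(j < 0) c j * f j m) = fun _ => 0
    by apply/funext => m; rewrite big_ord0.
  exact: F0.
have -> : (fun m => \sum_(j < K.+1) c j * f j m) =
   (fun m => 1 * \sum_(j < K) c (widen_ord (leqnSn K) j) * f (widen_ord (leqnSn K) j) m
      + c ord_max * f ord_max m).
  by apply/funext => m; rewrite big_ord_recr mul1r.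
by apply: F_lin => //; apply: IH.
Qed.

Lemma g_sum g K (f : 'I_K -> nat -> R) (c : 'I_K -> R) :
  dual_elt F g -> (forall j, F (f j)) ->
  g (fun m => \sum_(j < K) c j * f j m) = \sum_(j < K) c j * g (f j).
Proof.
move=> hg; elim: K f c => [|K IH] f c hf.
  have -> : (fun m => \sum_(j < 0) c j * f j m) = fun m => 0 * 0 + 0 * 0
    by apply/funext => m; rewrite big_ord0 mulr0 addr0.
  by rewrite big_ord0 (hg 0 0 (fun _ => 0) (fun _ => 0)) ?mul0r ?addr0 //; exact: F0.
have -> : (fun m => \sum_(j < K.+1) c j * f j m) =
   (fun m => 1 * \sum_(j < K) c (widen_ord (leqnSn K) j) * f (widen_ord (leqnSn K) j) m
      + c ord_max * f ord_max m).
  by apply/funext => m; rewrite big_ord_recr mul1r.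
rewrite hg //; last by apply: F_sum.
by rewrite IH // mul1r big_ord_recr.
Qed.

Variable P : (nat -> R) -> (nat -> R).
Hypothesis Pl1 : forall a, l1 a -> l1 (P a).
Hypothesis Plin : forall (s t : R) a b, l1 a -> l1 b ->
  P (fun n => s * a n + t * b n) = (fun n => s * P a n + t * P b n).
Hypothesis Pid : forall a, l1 a -> P (P a) = P a.
Hypothesis Pnorm : forall a, l1 a -> l1norm a <= 1 -> l1norm (P a) <= 1.
Hypothesis Pker : forall a, l1 a -> (P a = (fun _ => 0) <-> annihilator F a).

Lemma l10 : l1 (fun _ : nat => (0:R)).
Proof.
rewrite /l1; have := fin_series_lim (K := 0) (a := fun k => `|(fun _ : nat => (0:R)) k|).
by case => // m _; rewrite normr0.
Qed.

Lemma l1_sum K (f : 'I_K -> nat -> R) (c : 'I_K -> R) :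
  (forall j, l1 (f j)) -> l1 (fun m => \sum_(j < K) c j * f j m).
Proof.
elim: K f c => [|K IH] f c hf.
  have -> : (fun m => \sum_(j < 0) c j * f j m) = fun _ => 0
    by apply/funext => m; rewrite big_ord0.
  exact: l10.
have -> : (fun m => \sum_(j < K.+1) c j * f j m) =
   (fun m => 1 * \sum_(j < K) c (widen_ord (leqnSn K) j) * f (widen_ord (leqnSn K) j) m
      + c ord_max * f ord_max m).
  by apply/funext => m; rewrite big_ord_recr mul1r.
by apply: l1_lin => //; apply: IH.
Qed.

Lemma P_sum K (f : 'I_K -> nat -> R) (c : 'I_K -> R) :
  (forall j, l1 (f j)) ->
  P (fun m => \sum_(j < K) c j * f j m) = fun m => \sum_(j < K) c j * P (f j) m.
Proof.
elim: K f c => [|K IH] f c hf.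
  have -> : (fun m => \sum_(j < 0) c j * f j m) = fun m => 0 * 0 + 0 * 0
    by apply/funext => m; rewrite big_ord0 mulr0 addr0.
  rewrite (Plin 0 0 l10 l10); apply/funext => m; by rewrite big_ord0 !mul0r addr0.
have -> : (fun m => \sum_(j < K.+1) c j * f j m) =
   (fun m => 1 * \sum_(j < K) c (widen_ord (leqnSn K) j) * f (widen_ord (leqnSn K) j) m
      + c ord_max * f ord_max m).
  by apply/funext => m; rewrite big_ord_recr mul1r.
rewrite Plin //; last by apply: l1_sum.
by rewrite IH //; apply/funext => m; rewrite mul1r big_ord_recr.
Qed.

Lemma fin_l1 a K : (forall m, (K <= m)%N -> a m = 0) ->
  l1 a /\ l1norm a = \sum_(m < K) `|a m|.
Proof.
move=> H; have H' : forall m, (K <= m)%N -> `|a m| = 0 by move=> m /H ->; rewrite normr0.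
exact: (fin_series_lim H').
Qed.

Lemma pairing_fin a x K : (forall m, (K <= m)%N -> a m = 0) ->
  pairing a x = \sum_(m < K) a m * x m.
Proof.
move=> H; have H' : forall m, (K <= m)%N -> a m * x m = 0 by move=> m /H ->; rewrite mul0r.
by have [_ <-] := fin_series_lim H'.
Qed.

Lemma ev_supp (j m : nat) : (j.+1 <= m)%N -> @ev R j m = 0.
Proof. by move=> h; rewrite /ev; case: eqP => // e; subst; rewrite ltnn in h. Qed.

Lemma l1_ev j : l1 (@ev R j) /\ l1norm (@ev R j) = 1.
Proof.
have [h1 h2] := fin_l1 (ev_supp (j := j)); split => //; rewrite h2 big_ord_recr /= big1.
  by rewrite /ev eqxx normr1 add0r.
by move=> k _; rewrite /ev; case: eqP => [e|]; [have := ltn_ord k; rewrite e ltnn | rewrite normr0].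
Qed.

Variable N : nat.
Hypothesis hN : forall m, (wv v m <= Amx v N)%MS.

Definition fsv (r : 'rV[R]_N) : nat -> R := fun m => \sum_(j < N) r 0 j * @ev R j m.

Lemma fsv_supp r m : (N <= m)%N -> fsv r m = 0.
Proof.
move=> h; rewrite /fsv big1 // => j _; rewrite ev_supp ?mulr0 //.
exact: leq_trans (ltn_ord j) h.
Qed.

Lemma fsv_ord r (k : 'I_N) : fsv r k = r 0 k.
Proof.
rewrite /fsv (bigD1 k) //= /ev eqxx mulr1 big1 ?addr0 // => j hj.
by case: eqP => [/val_inj e|]; [rewrite e eqxx in hj | rewrite mulr0].
Qed.

Lemma l1_fsv r : l1 (fsv r).
Proof. by apply: l1_sum => j; case: (l1_ev j). Qed.

Lemma P_fsv r : P (fsv r) = fun m => \sum_(j < N) r 0 j * P (@ev R j) m.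
Proof. by apply: P_sum => j; case: (l1_ev j). Qed.

Lemma pairing_fsv r x : pairing (fsv r) x = \sum_(j < N) r 0 j * x j.
Proof. by rewrite (pairing_fin _ (@fsv_supp r)); apply: eq_bigr => j _; rewrite fsv_ord. Qed.

Lemma K2 (u : 'rV[R]_n) (c : 'I_n -> R) : (u <= Amx v N)%MS ->
  \sum_(j < N) (u *m pinvmx (Amx v N)) 0 j * (\sum_(i < n) c i * v i j)
  = \sum_(i < n) c i * u 0 i.
Proof.
move=> /mulmxKpV hu.
rewrite -{2}hu; under eq_bigr do rewrite mulr_sumr.
rewrite exchange_big /=; apply: eq_bigr => i _; rewrite !mxE mulr_sumr.
apply: eq_bigr => j _; have -> : Amx v N j i = v i j by rewrite mxE.
by rewrite mulrCA.
Qed.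

Lemma g0 g : dual_elt F g -> g (fun _ => 0) = 0.
Proof.
move=> hg; have := hg 0 0 (fun _ => 0) (fun _ => 0) F0 F0 => /=.
have -> : (fun _ : nat => 0 * (0:R) + 0 * 0) = (fun _ : nat => (0:R)).
  by apply/funext => m; rewrite mul0r addr0.
by move=> ->; rewrite !mul0r addr0.
Qed.

Definition gam (g : (nat -> R) -> R) : 'rV[R]_n := \row_i g (v i).

Lemma K1 g : dual_elt F g -> (gam g <= Amx v N)%MS.
Proof.
move=> hg; rewrite submxE; apply/eqP/rowP => k; rewrite !mxE.
have -> : \sum_j gam g 0 j * cokermx (Amx v N) j k
   = \sum_j cokermx (Amx v N) j k * g (v j).
  by apply: eq_bigr => j _; rewrite mxE mulrC.
rewrite -g_sum //; last exact: F_v.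
have -> : (fun m => \sum_(j < n) cokermx (Amx v N) j k * v j m) = fun _ => 0.
  apply/funext => m; have := hN m; rewrite submxE => /eqP /rowP /(_ k).
  rewrite !mxE => H; rewrite -[X in _ = X]H; apply: eq_bigr => j _.
  have -> : wv v m 0 j = v j m by rewrite mxE.
  by rewrite mulrC.
exact: g0.
Qed.

Lemma sum_fsv r x M : (N <= M)%N ->
  \sum_(k < M) fsv r k * x k = \sum_(j < N) r 0 j * x j.
Proof.
move=> hM; rewrite (@sum_supp _ (fun k => fsv r k * x k) N) //.
  by apply: eq_bigr => j _; rewrite fsv_ord.
by move=> k hk; rewrite fsv_supp ?mul0r.
Qed.

Lemma sum_ev j x M : (j < M)%N -> \sum_(k < M) @ev R j k * x k = x j.
Proof.
move=> hM; rewrite (@sum_supp _ (fun k => @ev R j k * x k) j.+1) //.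
  rewrite big_ord_recr /= big1 ?add0r; first by rewrite /ev eqxx mul1r.
  by move=> k _; rewrite /ev; case: eqP => [e|]; [have := ltn_ord k; rewrite e ltnn | rewrite mul0r].
by move=> k hk; rewrite ev_supp ?mul0r.
Qed.

Lemma K3 m : P (@ev R m) = P (fsv (wv v m *m pinvmx (Amx v N))).
Proof.
set r := wv v m *m pinvmx (Amx v N).
have l1e := (l1_ev m).1.
have hd : l1 (fun k => 1 * @ev R m k + (-1) * fsv r k) by apply: l1_lin => //; exact: l1_fsv.
have : annihilator F (fun k => 1 * @ev R m k + (-1) * fsv r k).
  split => // x [c ->].
  rewrite (@pairing_fin _ _ (N + m.+1)%N); last first.
    move=> k hk; rewrite ev_supp ?fsv_supp; try lia; by rewrite !(mulr0, addr0, mul0r).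
  under eq_bigr do rewrite mul1r mulN1r mulrDl mulNr.
  rewrite big_split /= sumrN.
  rewrite (@sum_ev m (fun i => \sum_(i0 < n) c i0 * v i0 i)); last by lia.
  rewrite (@sum_fsv r (fun i => \sum_(i0 < n) c i0 * v i0 i)); last by lia.
  rewrite K2 //; apply/eqP; rewrite subr_eq0; apply/eqP.
  by apply: eq_bigr => i _; rewrite mxE.
move=> /(proj2 (Pker hd)); rewrite Plin //; last exact: l1_fsv.
move=> H; apply/funext => k; have := congr1 (fun f => f k) H => /=.
by rewrite mul1r mulN1r => /eqP; rewrite subr_eq0 => /eqP.
Qed.

Definition phi M (y : nat -> R) a := \sum_(k < M) P a k * y k.
Definition xphi M y : nat -> R :=
  fun m => \sum_(i < n) ((\row_(j < N) phi M y (@ev R j)) *m (pinvmx (Amx v N))^T) 0 i * v i m.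

Lemma phi_fsv M y r : phi M y (fsv r) = \sum_(j < N) r 0 j * phi M y (@ev R j).
Proof.
rewrite /phi P_fsv; under eq_bigr do rewrite mulr_suml.
rewrite exchange_big /=; apply: eq_bigr => j _; rewrite mulr_sumr.
by apply: eq_bigr => k _; rewrite mulrA.
Qed.

Lemma xphi_eq M y m : xphi M y m = phi M y (@ev R m).
Proof.
have -> : phi M y (@ev R m) = phi M y (fsv (wv v m *m pinvmx (Amx v N))) by rewrite /phi K3.
rewrite phi_fsv /xphi.
under eq_bigr do rewrite mxE mulr_suml.
under [RHS]eq_bigr do rewrite mxE mulr_suml.
rewrite exchange_big /=; apply: eq_bigr => j _; apply: eq_bigr => i _.
have -> : (\row_(j0 < N) phi M y (@ev R j0)) 0 j = phi M y (@ev R j) by rewrite mxE.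
have -> : (pinvmx (Amx v N))^T j i = pinvmx (Amx v N) i j by rewrite mxE.
have -> : wv v m 0 i = v i m by rewrite mxE.
ring.
Qed.

Lemma F_xphi M y : F (xphi M y).
Proof. by eexists. Qed.

Lemma phi_bound M y m : (forall k, `|y k| <= 1) -> `|phi M y (@ev R m)| <= 1.
Proof.
move=> hy; have [l1e ne] := l1_ev m.
apply: le_trans (ler_norm_sum _ _ _) _.
apply: le_trans (Pnorm l1e _); last by rewrite ne.
apply: le_trans (psum_le_l1 M (Pl1 l1e)).
apply: ler_sum => k _; rewrite normrM -[leRHS]mulr1 ler_wpM2l //.
Qed.

Definition rg g : 'rV[R]_N := gam g *m pinvmx (Amx v N).
Definition Tm g : nat -> R := P (fsv (rg g)).

Lemma g_rep g c : dual_elt F g ->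
  g (fun m => \sum_(i < n) c i * v i m) = \sum_(j < N) rg g 0 j * (\sum_(i < n) c i * v i j).
Proof.
move=> hg; rewrite /rg K2 ?K1 // g_sum //; last exact: F_v.
by apply: eq_bigr => i _; rewrite mxE.
Qed.

Lemma supnorm_le x : F x -> forall m, `|x m| <= supnorm x.
Proof.
move=> [c ->] m; rewrite /supnorm.
have hc := c0_sum c hv.
have hb : has_ubound (range (fun k => `|(fun m => \sum_(i < n) c i * v i m) k|)).
  by apply: cvg_has_ub; apply/cvg_ex; eexists; exact: hc.
by apply: (ub_le_sup hb); exists m.
Qed.

Lemma dual_bound g x : dual_elt F g -> F x -> supnorm x <= 1 -> `|g x| <= l1norm (Tm g).
Proof.
move=> hg hx hs.
have hx1 : forall k, `|x k| <= 1 by move=> k; apply: le_trans (supnorm_le hx k) hs.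
set r := fsv (rg g); set h := Tm g.
have lr : l1 r by exact: l1_fsv.
have lh : l1 h by exact: Pl1.
have gx : g x = pairing r x.
  by case: hx => c ->; rewrite g_rep // pairing_fsv.
have hd : l1 (fun k => 1 * r k + (-1) * h k) by exact: l1_lin.
have : P (fun k => 1 * r k + (-1) * h k) = fun _ => 0.
  rewrite Plin // /h /Tm Pid //; apply/funext => k; by rewrite mul1r mulN1r subrr.
move=> /(proj1 (Pker hd)) [_ /(_ x hx)].
have [cr _] := pairing_bound lr hx1.
have [ch hbd] := pairing_bound lh hx1.
rewrite /pairing.
have -> : (fun m => (1 * r m + (-1) * h m) * x m) = (fun k => r k * x k) - (fun k => h k * x k).
  by apply/funext => k /=; rewrite mul1r mulN1r mulrBl.
rewrite lim_seriesB // => /eqP; rewrite subr_eq0 => /eqP e.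
by rewrite gx /pairing e.
Qed.

Lemma supnorm0 : supnorm (fun _ : nat => (0:R)) <= 1.
Proof.
rewrite /supnorm; apply: ge_sup; first by exists `|(0:R)|, 0%N.
by move=> _ [k _ <-]; rewrite normr0 ler01.
Qed.

Lemma main_norm g : dual_elt F g -> l1norm (Tm g) = dualnorm F g.
Proof.
move=> hg; rewrite /dualnorm.
set S := [set `|g x| | x in [set x | F x /\ supnorm x <= 1]].
have ubS : ubound S (l1norm (Tm g)) by move=> _ [x [hx hs] <-]; exact: dual_bound.
have neS : S !=set0 by exists `|g (fun _ => 0)|, (fun _ => 0); split => //; [exact: F0 | exact: supnorm0].
apply/le_anti/andP; split; last exact: ge_sup.
have lr : l1 (fsv (rg g)) by exact: l1_fsv.
apply: l1norm_le; first exact: Pl1.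
move=> M; set h := Tm g; set y := fun k => Num.sg (h k).
have hy : forall k, `|y k| <= 1 by move=> k; rewrite /y normr_sg; case: (_ != _); rewrite ?ler01 ?lexx.
set x := xphi M y.
have hx : F x by exact: F_xphi.
have hs : supnorm x <= 1.
  rewrite /supnorm; apply: ge_sup; first by exists `|x 0%N|, 0%N.
  by move=> _ [k _ <-]; rewrite /x xphi_eq; exact: phi_bound.
have e1 : \sum_(k < M) `|h k| = phi M y (fsv (rg g)).
  rewrite /phi; apply: eq_bigr => k _; rewrite /y /h /Tm normrEsg mulrC //.
have e2 : phi M y (fsv (rg g)) = g x.
  rewrite phi_fsv /x /xphi g_rep //; apply: eq_bigr => j _; by rewrite -xphi_eq.
rewrite e1 e2; apply: le_trans (ler_norm _) _.
apply: ub_le_sup; first by exists (l1norm (Tm g)).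
by exists x.
Qed.

Lemma gam_lin (s t : R) g h : gam (fun x => s * g x + t * h x) = s *: gam g + t *: gam h.
Proof. by apply/rowP => i; rewrite !mxE. Qed.

Lemma Tm_lin (s t : R) g h : Tm (fun x => s * g x + t * h x) = fun m => s * Tm g m + t * Tm h m.
Proof.
rewrite /Tm -Plin; try exact: l1_fsv.
congr P; rewrite /rg gam_lin mulmxDl -!scalemxAl /fsv; apply/funext => m.
rewrite !mulr_sumr -big_split; apply: eq_bigr => j _ /=; rewrite !mxE; ring.
Qed.

Lemma Tm_span g : Tm g = fun m => \sum_(j < N) rg g 0 j * P (@ev R j) m.
Proof. exact: P_fsv. Qed.

Lemma sc : k_strictly_convex N (Tm @` dual_elt F).
Proof.
move=> x hx hind; exfalso.
have : forall i, exists r : 'rV[R]_N, x i = fun m => \sum_(j < N) r 0 j * P (@ev R j) m.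
  move=> i; have [[g _ <-] _] := hx i; exists (rg g); exact: Tm_span.
move=> /choice [f hf].
pose B : 'M[R]_(N.+1, N) := \matrix_(i, j) f i 0 j.
have hK : kermx B != 0.
  rewrite -mxrank_eq0 mxrank_ker; have := rank_leq_col B; lia.
have [i0 hi0] : exists i0, row i0 (kermx B) != 0.
  case: (pselect (exists i0, row i0 (kermx B) != 0)) => // H; exfalso.
  move/negP: hK; apply; apply/eqP/matrixP => i j.
  have : ~~ (row i (kermx B) != 0) by apply/negP => hi; apply: H; exists i.
  rewrite negbK => /eqP /rowP /(_ j); rewrite !mxE => ->.
  done.
set c := row i0 (kermx B).
have cB : c *m B = 0 by apply/sub_kermxP; exact: row_sub.
have := hind (fun i => c 0 i).
have H0 : (fun m => \sum_(i < N.+1) c 0 i * x i m) = fun _ => 0.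
  apply/funext => m; under eq_bigr do rewrite hf mulr_sumr.
  rewrite exchange_big /= big1 // => j _.
  have := congr1 (fun M : 'M[R]_(1, N) => M 0 j) cB; rewrite !mxE => e.
  apply: (@etrans _ _ ((\sum_i c 0 i * B i j) * P (@ev R j) m)); last by rewrite e mul0r.
  rewrite mulr_suml; apply: eq_bigr => i _.
  have -> : B i j = f i 0 j by rewrite mxE.
  by rewrite mulrA.
move=> /(_ H0) hc; move/negP: hi0; apply; apply/eqP/rowP => i; rewrite hc mxE //.
Qed.

Lemma main_C : exists (k : nat) (T : ((nat -> R) -> R) -> (nat -> R)),
    [/\ (forall g, dual_elt F g -> l1 (T g)),
        (forall g, dual_elt F g -> l1norm (T g) = dualnorm F g),
        (forall (s t : R) g h, dual_elt F g -> dual_elt F h ->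
            T (fun x => s * g x + t * h x) = (fun m => s * T g m + t * T h m)) &
        k_strictly_convex k (T @` dual_elt F)].
Proof.
exists N, Tm; split.
- by move=> g _; apply: Pl1; exact: l1_fsv.
- exact: main_norm.
- by move=> s t g h _ _; exact: Tm_lin.
- exact: sc.
Qed.
End C.

Theorem theorem4p15 (R : realType) (n : nat) (v : 'I_n -> nat -> R) :
  (forall i, c0 (v i)) ->
  is_ideal_in_c0 (fspan v) ->
  exists (k : nat) (T : ((nat -> R) -> R) -> (nat -> R)),
    [/\ (forall g, dual_elt (fspan v) g -> l1 (T g)),
        (forall g, dual_elt (fspan v) g -> l1norm (T g) = dualnorm (fspan v) g),
        (forall (s t : R) g h, dual_elt (fspan v) g -> dual_elt (fspan v) h ->
            T (fun x => s * g x + t * h x) = (fun m => s * T g m + t * T h m)) &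
        k_strictly_convex k (T @` dual_elt (fspan v))].
Proof.
move=> hv [P [[Pl1 Plin Pid Psup] Pker]].
have Pnorm : forall a, l1 a -> l1norm a <= 1 -> l1norm (P a) <= 1.
  move=> a ha hna.
  set S := [set l1norm (P a) | a in [set a | l1 a /\ l1norm a <= 1]].
  have hS : has_sup S.
    case: (pselect (has_sup S)) => // /sup_out h.
    by move: Psup; rewrite -/S h => /eqP; rewrite eq_sym oner_eq0.
  rewrite -Psup; apply: (ub_le_sup hS.2).
  by exists a.
have [N hN] := stab v.
exact: (main_C hv Pl1 Plin Pid Pnorm Pker hN).
Qed.
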